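(* Let $p\geq 3$ be a prime, $u\in\{1,\ldots,p-1\}$ and $s$ a positive integer. Then for every integer $n>up^{s}$ we have $$\nu_{p}\big(A_{p,(p-1)(up^s-1)}(n)\big)\geq 1.$$
   Context: For an integer $m\geq 2$ and a positive integer $k$, the integers $A_{m,k}(n)$, $n\in\mathbb{N}=\{0,1,2,\ldots\}$, are defined by the formal power series identity $\prod_{i=0}^{\infty}\big(1-x^{m^{i}}\big)^{-k}=\sum_{n=0}^{\infty}A_{m,k}(n)x^{n}$. Equivalently, $A_{m,k}(n)$ is the number of representations of $n$ as a sum of powers of $m$ where each summand carries one of $k$ colors. For a prime $p$, $\nu_p(n)$ denotes the $p$-adic valuation of the integer $n$, with $\nu_p(0)=+\infty$. *)

(* Defs.v *)
From mathcomp Require Import all_boot.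
Set Implicit Arguments. Unset Strict Implicit. Unset Printing Implicit Defensive.

(* Coefficients of the finite product prod_{i < L} (1 - x^(m^i))^(-k).
   Using (1 - x^d)^(-k) = sum_j 'C(j + k - 1, k - 1) x^(d j):
   partial_coef m k 0 n = [n == 0], and multiplying by the factor with
   i = L convolves with these coefficients. *)
Fixpoint partial_coef (m k L n : nat) : nat :=
  match L with
  | 0 => (n == 0)
  | L'.+1 =>
      \sum_(0 <= j < (n %/ m ^ L').+1)
        'C(j + k - 1, k - 1) * partial_coef m k L' (n - j * m ^ L')
  end.

(* A_{m,k}(n): coefficient of x^n in prod_{i >= 0} (1 - x^(m^i))^(-k).
   For m >= 2 the factors with m^i > n (in particular all i >= n+1)
   do not affect the coefficient of x^n, so the infinite product
   is truncated at L = n + 1. *)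
Definition A (m k n : nat) : nat := partial_coef m k n.+1 n.

(* Main.v *)
Require Import Defs.
From mathcomp Require Import all_boot all_algebra.
From mathcomp Require Import zify.
Import GRing.Theory.
Local Open Scope ring_scope.

Definition eqN {R : comNzRingType} (N : nat) (P Q : {poly R}) :=
  forall i, (i < N)%N -> P`_i = Q`_i.

Lemma eqN_refl (R : comNzRingType) (N : nat) (P : {poly R}) : eqN N P P.
Proof. by []. Qed.
Lemma eqN_sym (R : comNzRingType) (N : nat) (P Q : {poly R}) : eqN N P Q -> eqN N Q P.
Proof. by move=> h i hi; rewrite h. Qed.
Lemma eqN_trans (R : comNzRingType) (N : nat) (P Q S : {poly R}) : eqN N P Q -> eqN N Q S -> eqN N P S.
Proof. by move=> h1 h2 i hi; rewrite h1 // h2. Qed.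

Lemma eqN_mul (R : comNzRingType) (N : nat) (P P' Q Q' : {poly R}) :
  eqN N P P' -> eqN N Q Q' -> eqN N (P * Q) (P' * Q').
Proof.
move=> hP hQ i hi; rewrite !coefM; apply: eq_bigr => j _.
have hj := ltn_ord j.
by rewrite hP ?hQ //; lia.
Qed.

Lemma eqN_comp (R : comNzRingType) (N : nat) (P Q : {poly R}) d : (0 < d)%N ->
  eqN N P Q -> eqN N (P \Po 'X^d) (Q \Po 'X^d).
Proof.
move=> hd h i hi; rewrite !coef_comp_poly_Xn //; case: ifP => // _.
by rewrite h //; apply: leq_ltn_trans (leq_div _ _) hi.
Qed.

Definition Bk (R : comNzRingType) N k : {poly R} :=
  \poly_(j < N) ('C(j + k - 1, k - 1))%:R.

Lemma Bk_step (R : comNzRingType) (N : nat) k : (0 < k)%N ->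
  eqN N (Bk R N k.+1 * (1 - 'X)) (Bk R N k).
Proof.
case: k => // k _ i hi.
rewrite mulrBr mulr1 coefB coefMX !coef_poly hi.
case: i hi => [|i] hi /=.
  by rewrite subr0 !addnS !subSS !subn0 add0n !binn.
have hi' : (i < N)%N by lia.
rewrite hi'.
have -> : (i.+1 + k.+2 - 1 = (i + k.+1).+1)%N by lia.
have -> : (k.+2 - 1 = k.+1)%N by lia.
have -> : (i + k.+2 - 1 = i + k.+1)%N by lia.
have -> : (i.+1 + k.+1 - 1 = i + k.+1)%N by lia.
have -> : (k.+1 - 1 = k)%N by lia.
by rewrite binS natrD addrAC subrr add0r.
Qed.

Lemma Bk_inv (R : comNzRingType) (N : nat) k : (0 < k)%N -> eqN N (Bk R N k * (1 - 'X) ^+ k) 1.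
Proof.
elim: k => // k IH _.
case: k IH => [|k] IH.
  move=> i hi; rewrite expr1 mulrBr mulr1 coefB coefMX !coef_poly hi coef1.
  case: i hi => [|i] hi /=; first by rewrite subr0 bin0.
  by rewrite ifT ?bin0 ?subrr //; lia.
apply: eqN_trans (IH isT).
rewrite exprS mulrA.
apply: eqN_mul => //; exact: Bk_step.
Qed.

Lemma Bd_inv (R : comNzRingType) (N : nat) k d : (0 < k)%N -> (0 < d)%N ->
  eqN N ((Bk R N k \Po 'X^d) * (1 - 'X^d) ^+ k) 1.
Proof.
move=> hk hd.
have -> : (1 - 'X^d : {poly R}) ^+ k = ((1 - 'X) ^+ k) \Po 'X^d.
  by rewrite rmorphXn /= comp_polyB comp_polyC comp_polyX.
rewrite -comp_polyM.
have h1 : (1 : {poly R}) = 1 \Po 'X^d by rewrite -polyC1 comp_polyC.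
rewrite [X in eqN _ _ X]h1.
exact: (@eqN_comp R N _ _ d hd (@Bk_inv R N k hk)).
Qed.

Lemma coef_MB (R : comNzRingType) (N : nat) k d (P : {poly R}) c :
  (0 < d)%N -> (c < N)%N ->
  (P * (Bk R N k \Po 'X^d))`_c =
  \sum_(0 <= j < (c %/ d).+1) ('C(j + k - 1, k - 1))%:R * P`_(c - j * d).
Proof.
move=> hd hc.
rewrite /Bk poly_def.
rewrite (big_morph (comp_poly ('X^d : {poly R})) (fun p q => comp_polyD p q 'X^d) (comp_poly0 _)).
rewrite mulr_sumr coef_sum.
rewrite (eq_bigr (fun j : 'I_N => ('C(j + k - 1, k - 1))%:R *
            (if (c < j * d)%N then 0 else P`_(c - j * d)))); last first.
  move=> j _; rewrite comp_polyZ comp_Xn_poly -exprM mulnC -scalerAr coefZ coefMXn.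
  by [].
rewrite -(big_mkord xpredT (fun j => ('C(j + k - 1, k - 1))%:R *
            (if (c < j * d)%N then 0 else P`_(c - j * d)))).
have hcN : ((c %/ d).+1 <= N)%N by apply: leq_ltn_trans (leq_div _ _) hc.
rewrite (big_cat_nat (leq0n _) hcN) /=.
rewrite [X in _ + X]big1_seq ?addr0; last first.
  move=> j /andP[_]; rewrite mem_index_iota => /andP[h _].
  by rewrite ifT ?mulr0 // -ltn_divLR.
apply: eq_big_nat => j /andP[_ hj].
by rewrite ifF // ltnNge -leq_divRL // -ltnS hj.
Qed.

Lemma Q_coef (R : comNzRingType) (N : nat) k m L c : (0 < m)%N -> (c < N)%N ->
  (\prod_(i < L) (Bk R N k \Po 'X^(m ^ i)))`_c = (partial_coef m k L c)%:R.
Proof.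
move=> hm; elim: L c => [|L IH] c hc.
  by rewrite big_ord0 coef1.
rewrite big_ord_recr /= coef_MB ?expn_gt0 ?hm // natr_sum.
apply: eq_bigr => j _; rewrite natrM IH //.
exact: leq_ltn_trans (leq_subr _ _) hc.
Qed.

Lemma eqN_exp (R : comNzRingType) (N : nat) (P Q : {poly R}) M :
  eqN N P Q -> eqN N (P ^+ M) (Q ^+ M).
Proof.
move=> h; elim: M => [|M IH]; first by rewrite !expr0.
by rewrite !exprS; apply: eqN_mul.
Qed.

Arguments eqN_refl {R N} P.
Arguments eqN_sym {R N P Q}.
Arguments eqN_trans {R N P Q S}.
Arguments eqN_mul {R N P P' Q Q'}.

Lemma frob_pow (p : nat) (hp : prime p) (i : nat) :
  (1 - 'X : {poly 'F_p}) ^+ (p ^ i) = 1 - 'X^(p ^ i).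
Proof.
have hc : p \in [pchar {poly 'F_p}] by rewrite pchar_poly; exact: pchar_Fp.
elim: i => [|i IH]; first by rewrite !expn0 !expr1.
rewrite expnSr exprM IH -(pFrobenius_autE hc) pFrobenius_autB_comm; last first.
  exact: mulrC.
by rewrite pFrobenius_aut1 pFrobenius_autE -exprM.
Qed.

Local Close Scope ring_scope.

Theorem theorem3p1 (p u s n : nat) :
  prime p -> 3 <= p -> 1 <= u <= p - 1 -> 0 < s ->
  u * p ^ s < n ->
  p %| A p ((p - 1) * (u * p ^ s - 1)) n.
Proof.
move=> hp hp3 /andP[hu1 hu2] hs hn.
set M := u * p ^ s - 1.
set k := (p - 1) * M.
have hp0 : 0 < p by lia.
have hps : 0 < p ^ s by rewrite expn_gt0 hp0.
have hps3 : p ^ 1 <= p ^ s by rewrite leq_pexp2l; lia.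
have hM2 : 2 <= M by rewrite /M; move: hps3; rewrite expn1; nia.
have hk : 0 < k by rewrite /k muln_gt0; apply/andP; split; lia.
have hM : M < n by rewrite /M; lia.
rewrite (dvdn_pcharf (pchar_Fp hp)) /A.
set N := n.+1.
rewrite -(@Q_coef _ N k p N n hp0 (ltnSn n)).
set Q := (\prod_(i < N) _)%R.
set E := (\prod_(i < N) (1 - 'X^(p ^ i)) ^+ k : {poly 'F_p})%R.
have h1 : eqN N (Q * E)%R 1%R.
  rewrite /Q /E -big_split /=.
  apply: (big_ind (fun x => eqN N x 1%R)) => //.
    move=> x y hx hy; rewrite -(mulr1 1%R); exact: eqN_mul.
  move=> i _; apply: Bd_inv => //; by rewrite expn_gt0 hp0.
have hE : E = ((1 - 'X) ^+ (\sum_(i < N) p ^ i * k))%R.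
  rewrite /E -prodrXr; apply: eq_bigr => i _.
  by rewrite exprM frob_pow.
have hexp : \sum_(i < N) p ^ i * k + M = p ^ N * M.
  rewrite -big_distrl /=.
  have e := predn_exp p N.
  have hpN : 0 < p ^ N by rewrite expn_gt0 hp0.
  move: e; set S := \sum_(i < N) p ^ i => e.
  rewrite /k; nia.
have h2 : eqN N (E * (1 - 'X) ^+ M)%R 1%R.
  rewrite hE -exprD hexp exprM frob_pow //.
  rewrite -(expr1n _ M).
  apply: eqN_exp => i hi.
  rewrite coefB coefXn coef1.
  have : N < p ^ N by apply: ltn_expl; lia.
  move=> hN; have -> : (i == p ^ N) = false.
    by apply/negbTE; rewrite neq_ltn (ltn_trans hi hN).
  by rewrite expr1n subr0 coef1.

have h3 : eqN N Q ((1 - 'X) ^+ M)%R.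
  have := eqN_mul h1 (eqN_refl ((1 - 'X) ^+ M)%R).
  rewrite mul1r -mulrA => h.
  apply: eqN_trans h.
  rewrite -[X in eqN N X _](mulr1 Q).
  apply: eqN_mul => //; exact: eqN_sym.
rewrite h3 //.
rewrite nth_default //.
apply: leq_trans (size_poly_exp_leq _ _) _.
have -> : (1 - 'X : {poly 'F_p})%R = (- ('X - 1%:P))%R by rewrite opprB polyC1.
by rewrite size_polyN size_XsubC /= mul1n.
Qed.
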